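(* Let $H$ be the three-dimensional Heisenberg group with the left-invariant metric $g$ (parameter $A>0$) and magnetic form $\Omega$ (parameter $B$) of the context, and let $\Gamma_1,\Gamma_2<H$ be cocompact lattices. Suppose that for some $E>|B|$ the manifolds $\Gamma_1\backslash H$ and $\Gamma_2\backslash H$ have the same marked magnetic length spectrum at energy $E$. Then $\Gamma_1\backslash H$ and $\Gamma_2\backslash H$ are isometric.
   Context: $H$ is the simply connected Lie group whose Lie algebra has basis $X,Y,Z$ with only nonzero bracket $[X,Y]=Z$. $g$ is the left-invariant metric with $\{X/\sqrt A,Y/\sqrt A,Z\}$ orthonormal; with $\{\alpha,\beta,\zeta\}$ the dual basis, $\Omega=d(B\zeta)=-B\alpha\wedge\beta$. Magnetic geodesics are curves with $\nabla_{\sigma'}\sigma'=F\sigma'$, $g(Fu,v)=\Omega(u,v)$; they have constant speed $E$ (energy). Each $\Gamma_i\backslash H$ carries the induced metric and magnetic form, and $\pi_1(\Gamma_i\backslash H)\cong\Gamma_i$, so free homotopy classes of closed curves correspond to conjugacy classes of $\Gamma_i$; an isomorphism $\phi:\Gamma_1\to\Gamma_2$ induces a bijection $\phi_*$ of free homotopy classes. For a free homotopy class $\mathcal C$, $L(\mathcal C;E)$ is the set of lengths of smoothly closed magnetic geodesics of energy $E$ in $\mathcal C$ (a closed magnetic geodesic of energy $E$ and period $\omega$ has length $E|\omega|$). The two manifolds have the same marked magnetic length spectrum at energy $E$ if there is an isomorphism $\phi:\Gamma_1\to\Gamma_2$ with $L(\phi_*\mathcal C;E)=L(\mathcal C;E)$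 for every nontrivial free homotopy class $\mathcal C$ of $\Gamma_1\backslash H$. *)

(* Defs.v *)
From Stdlib Require Import Reals.
From Coquelicot Require Import Coquelicot.
Open Scope R_scope.

(** Left-invariant fields: X = d/dx, Y = d/dy + x d/dz, Z = d/dz, and
    [X,Y] = Z is the only nonzero bracket. *)

Definition H : Type := (R * R * R)%type.
(* tangent vectors, in coordinates *)
Definition V : Type := (R * R * R)%type.

Definition cx (p : H) : R := fst (fst p).
Definition cy (p : H) : R := snd (fst p).
Definition cz (p : H) : R := snd p.

Definition hmul (p q : H) : H :=
  (cx p + cx q, cy p + cy q, cz p + cz q + cx p * cy q).
Definition hinv (p : H) : H :=
  (- cx p, - cy p, - cz p + cx p * cy p).
Definition hone : H := (0, 0, 0).

Definition hline (p : H) (s : R) (d : V) : H :=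
  (cx p + s * cx d, cy p + s * cy d, cz p + s * cz d).

Definition alpha (p : H) (u : V) : R := cx u.
Definition beta  (p : H) (u : V) : R := cy u.
Definition zeta  (p : H) (u : V) : R := cz u - cx p * cy u.

(** The left-invariant metric g with {X/sqrt A, Y/sqrt A, Z} orthonormal,
    i.e. g = A alpha^2 + A beta^2 + zeta^2. *)
Definition gmet (A : R) (p : H) (u v : V) : R :=
  A * (alpha p u * alpha p v + beta p u * beta p v) + zeta p u * zeta p v.

(** The magnetic form Omega = d(B zeta) = - B alpha /\ beta. *)
Definition Omega (B : R) (p : H) (u v : V) : R :=
  - B * (alpha p u * beta p v - alpha p v * beta p u).

Definition Dg (A : R) (p : H) (d u v : V) : R :=
  Derive (fun s => gmet A (hline p s d) u v) 0.

Definition curve_deriv (c c' : R -> V) : Prop :=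
  forall t, is_derive (fun s => cx (c s)) t (cx (c' t)) /\
            is_derive (fun s => cy (c s)) t (cy (c' t)) /\
            is_derive (fun s => cz (c s)) t (cz (c' t)).

(** Levi-Civita covariant acceleration, lowered with g (Christoffel symbols
    of the first kind):  g(nabla_{s'} s', w)
      = g(s'', w) + Gamma_{ij,l} s'^i s'^j w^l,
    Gamma_{ij,l} = 1/2 (d_i g_{jl} + d_j g_{il} - d_l g_{ij}). *)
Definition cov_acc_lowered (A : R) (p : H) (v1 v2 w : V) : R :=
  gmet A p v2 w + Dg A p v1 v1 w - / 2 * Dg A p w v1 v1.

(** Magnetic geodesic of energy E: nabla_{s'} s' = F s' with
    g(F u, v) = Omega(u, v), tested against every vector w (g is
    nondegenerate), and constant speed E. *)
Definition magnetic_geodesic (A B E : R) (sigma : R -> H) : Prop :=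
  exists sigma1 sigma2 : R -> V,
    curve_deriv sigma sigma1 /\ curve_deriv sigma1 sigma2 /\
    (forall t w, cov_acc_lowered A (sigma t) (sigma1 t) (sigma2 t) w
                 = Omega B (sigma t) (sigma1 t) w) /\
    (forall t, sqrt (gmet A (sigma t) (sigma1 t) (sigma1 t)) = E).

Definition sqnorm (p : H) : R := cx p ^ 2 + cy p ^ 2 + cz p ^ 2.

Definition subgroup (G : H -> Prop) : Prop :=
  G hone /\ (forall a b, G a -> G b -> G (hmul a b)) /\
  (forall a, G a -> G (hinv a)).

(** cocompact lattice: discrete subgroup with compact quotient G\H
    (equivalently, some closed ball K satisfies G K = H). *)
Definition cocompact_lattice (G : H -> Prop) : Prop :=
  subgroup G /\
  (exists eps, 0 < eps /\ forall g, G g -> sqnorm g < eps -> g = hone) /\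
  (exists r, forall p, exists g, G g /\ sqnorm (hmul g p) <= r).

Definition conj_in (G : H -> Prop) (d g : H) : Prop :=
  exists h, G h /\ d = hmul (hmul h g) (hinv h).

(** [in_length_spectrum A B E G g l]: l is the length of a smoothly closed
    magnetic geodesic of energy E in G\H in the free homotopy class
    corresponding to the conjugacy class of g in G.  Such a closed magnetic
    geodesic of period omega lifts to a magnetic geodesic sigma of H with
    sigma(t + omega) = d * sigma(t) for all t, d conjugate to g in G. *)
Definition in_length_spectrum (A B E : R) (G : H -> Prop) (g : H) (l : R)
  : Prop :=
  exists (sigma : R -> H) (omega : R) (d : H),
    magnetic_geodesic A B E sigma /\ G d /\ conj_in G d g /\
    (forall t, sigma (t + omega) = hmul d (sigma t)) /\
    l = E * Rabs omega.

Definition group_iso (G1 G2 : H -> Prop) (phi : H -> H) : Prop :=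
  (forall a, G1 a -> G2 (phi a)) /\
  (forall a b, G1 a -> G1 b -> phi (hmul a b) = hmul (phi a) (phi b)) /\
  (forall a b, G1 a -> G1 b -> phi a = phi b -> a = b) /\
  (forall c, G2 c -> exists a, G1 a /\ phi a = c).

Definition same_marked_magnetic_length_spectrum
    (A B E : R) (G1 G2 : H -> Prop) : Prop :=
  exists phi : H -> H, group_iso G1 G2 phi /\
    forall g, G1 g -> g <> hone ->
      forall l, in_length_spectrum A B E G1 g l <->
                in_length_spectrum A B E G2 (phi g) l.

(** Isometry of G1\H and G2\H (with the metrics induced by g): a
    diffeomorphism-level lift F : H -> H that is a bijection, differentiable
    with differential DF preserving g, and which maps G1-orbits exactly onto
    G2-orbits (so it descends to a bijection G1\H -> G2\H, which is then a
    Riemannian isometry of the induced metrics). *)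
Definition isometric_quotients (A : R) (G1 G2 : H -> Prop) : Prop :=
  exists (F : H -> H) (DF : H -> V -> V),
    (forall p q, F p = F q -> p = q) /\
    (forall q, exists p, F p = q) /\
    (forall p, filterdiff F (locally p) (DF p)) /\
    (forall p u v, gmet A (F p) (DF p u) (DF p v) = gmet A p u v) /\
    (forall p q, (exists g, G1 g /\ q = hmul g p) <->
                 (exists g', G2 g' /\ F q = hmul g' (F p))).

(* Main.v *)
Require Import Defs.
From Stdlib Require Import Reals Lra Psatz ZArith Classical Nsatz.
From Coquelicot Require Import Coquelicot.
Open Scope R_scope.

Lemma Dg_eq A p d u v :
  Dg A p d u v = - cx d * (cy u * zeta p v + cy v * zeta p u).
Proof.
  unfold Dg. apply is_derive_unique.
  unfold gmet, hline, alpha, beta, zeta, cx, cy, cz; simpl.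
  auto_derive; auto. ring.
Qed.

Lemma deriv0_const (f : R -> R) :
  (forall x, is_derive f x 0) -> forall a b, f b = f a.
Proof.
  intros Hf a b.
  destruct (MVT_abs f (fun _ => 0) a b) as [c [Hc _]].
  { intros c _. apply is_derive_Reals. apply Hf. }
  rewrite Rabs_R0, Rmult_0_l in Hc.
  apply Rabs_eq_0 in Hc. lra.
Qed.

Lemma isd_plus (f g : R -> R) x df dg : is_derive f x df -> is_derive g x dg ->
  is_derive (fun t => f t + g t) x (df + dg).
Proof. intros H1 H2. exact (is_derive_plus f g x df dg H1 H2). Qed.
Lemma isd_minus (f g : R -> R) x df dg : is_derive f x df -> is_derive g x dg ->
  is_derive (fun t => f t - g t) x (df - dg).
Proof. intros H1 H2. exact (is_derive_minus f g x df dg H1 H2). Qed.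
Lemma isd_mult (f g : R -> R) x df dg : is_derive f x df -> is_derive g x dg ->
  is_derive (fun t => f t * g t) x (df * g x + f x * dg).
Proof. intros H1 H2. exact (is_derive_mult f g x df dg H1 H2 Rmult_comm). Qed.
Lemma isd_const (a x : R) : is_derive (fun _ => a) x 0.
Proof. exact (is_derive_const a x). Qed.
Lemma isd_id (x : R) : is_derive (fun t => t) x 1.
Proof. exact (is_derive_id x). Qed.

Lemma deriv_shift (f f' : R -> R) (om c : R) :
  (forall t, is_derive f t (f' t)) ->
  (forall t, f (t + om) = c + f t) ->
  forall t, f' (t + om) = f' t.
Proof.
  intros Hd Hp t.
  assert (H1 : is_derive (fun s => f (s + om)) t (f' (t + om))).
  { assert (Hi : is_derive (fun s => s + om) t 1).
    { auto_derive; auto. }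
    generalize (is_derive_comp f (fun s => s + om) t (f' (t+om)) 1 (Hd _) Hi).
    intro HH. replace (f' (t+om)) with (scal 1 (f' (t+om))). exact HH.
    exact (scal_one _). }
  assert (H2 : is_derive (fun s => f (s + om)) t (f' t)).
  { apply (is_derive_ext (fun s => c + f s)). intro s. now rewrite Hp.
    replace (f' t) with (0 + f' t) by ring. apply isd_plus. apply isd_const. apply Hd. }
  apply is_derive_unique in H1. apply is_derive_unique in H2. congruence.
Qed.

Lemma mg_period A B E sigma omega d :
  0 < A -> 0 < E -> magnetic_geodesic A B E sigma ->
  (forall t, sigma (t + omega) = hmul d (sigma t)) ->
  (cx d = 0 /\ cy d = 0) \/
  omega ^ 2 * (E ^ 2 - B ^ 2) = A * (cx d ^ 2 + cy d ^ 2).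
Proof.
  intros HA HE [s1 [s2 [D1 [D2 [Heq Hen]]]]] Hper.
  set (X := fun t => cx (sigma t)). set (Y := fun t => cy (sigma t)).
  set (Z := fun t => cz (sigma t)).
  set (X1 := fun t => cx (s1 t)). set (Y1 := fun t => cy (s1 t)).
  set (Z1 := fun t => cz (s1 t)).
  set (X2 := fun t => cx (s2 t)). set (Y2 := fun t => cy (s2 t)).
  set (Z2 := fun t => cz (s2 t)).
  assert (DX : forall t, is_derive X t (X1 t)) by (intro t; apply D1).
  assert (DY : forall t, is_derive Y t (Y1 t)) by (intro t; apply D1).
  assert (DZ : forall t, is_derive Z t (Z1 t)) by (intro t; apply D1).
  assert (DX1 : forall t, is_derive X1 t (X2 t)) by (intro t; apply D2).
  assert (DY1 : forall t, is_derive Y1 t (Y2 t)) by (intro t; apply D2).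
  assert (DZ1 : forall t, is_derive Z1 t (Z2 t)) by (intro t; apply D2).
  assert (E1 : forall t, A * X2 t + Y1 t * (Z1 t - X t * Y1 t) = B * Y1 t).
  { intro t. generalize (Heq t (1,0,0)). unfold cov_acc_lowered.
    rewrite !Dg_eq. unfold gmet, Omega, alpha, beta, zeta, X2, Y1, Z1, X, cx, cy, cz; simpl.
    intro H. nra. }
  assert (E2 : forall t, A * Y2 t - X (t) * (Z2 t - X t * Y2 t) - X1 t * (Z1 t - 2 * X t * Y1 t) = - B * X1 t).
  { intro t. generalize (Heq t (0,1,0)). unfold cov_acc_lowered.
    rewrite !Dg_eq. unfold gmet, Omega, alpha, beta, zeta, X2, Y1, Z1, X, X1, Y2, Z2, cx, cy, cz; simpl.
    intro H. nra. }
  assert (E3 : forall t, Z2 t - X t * Y2 t - X1 t * Y1 t = 0).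
  { intro t. generalize (Heq t (0,0,1)). unfold cov_acc_lowered.
    rewrite !Dg_eq. unfold gmet, Omega, alpha, beta, zeta, X2, Y1, Z1, X, X1, Y2, Z2, cx, cy, cz; simpl.
    intro H. nra. }
  set (c := fun t => Z1 t - X t * Y1 t).
  assert (Dc : forall t, is_derive c t 0).
  { intro t. unfold c.
    apply (is_derive_ext (fun s => Z1 s - X s * Y1 s)); [reflexivity|].
    replace 0 with (Z2 t - (X1 t * Y1 t + X t * Y2 t)) by (generalize (E3 t); lra).
    apply isd_minus; [apply DZ1|].
    apply (isd_mult X Y1); auto. }
  set (c0 := c 0).
  assert (Hc : forall t, c t = c0) by (intro t; apply deriv0_const; exact Dc).
  assert (E1' : forall t, A * X2 t = (B - c0) * Y1 t).
  { intro t. generalize (E1 t) (Hc t). unfold c. intros; nra. }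
  assert (E2' : forall t, A * Y2 t = - (B - c0) * X1 t).
  { intro t. generalize (E2 t) (E3 t) (Hc t). unfold c. intros; nra. }
  assert (PX : forall t, X (t + omega) = cx d + X t).
  { intro t. unfold X. rewrite Hper. reflexivity. }
  assert (PY : forall t, Y (t + omega) = cy d + Y t).
  { intro t. unfold Y. rewrite Hper. reflexivity. }
  assert (PX1 := deriv_shift X X1 omega (cx d) DX PX).
  assert (PY1 := deriv_shift Y Y1 omega (cy d) DY PY).
  set (k := B - c0).
  assert (Hf : forall t, A * X1 t - k * Y t = A * X1 0 - k * Y 0).
  { apply (deriv0_const (fun t => A * X1 t - k * Y t)). intro t.
    replace 0 with (A * X2 t - k * Y1 t) by (unfold k; rewrite E1'; ring).
    apply isd_minus; apply is_derive_scal; auto. }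
  assert (Hg : forall t, A * Y1 t + k * X t = A * Y1 0 + k * X 0).
  { apply (deriv0_const (fun t => A * Y1 t + k * X t)). intro t.
    replace 0 with (A * Y2 t + k * X1 t) by (unfold k; rewrite E2'; ring).
    apply isd_plus; apply is_derive_scal; auto. }
  assert (K1 : k * cy d = 0).
  { generalize (Hf omega) (PX1 0) (PY 0). rewrite Rplus_0_l. intros; nra. }
  assert (K2 : k * cx d = 0).
  { generalize (Hg omega) (PY1 0) (PX 0). rewrite Rplus_0_l. intros; nra. }
  destruct (Req_dec k 0) as [Hk|Hk].
  2:{ left. split; [apply (Rmult_eq_reg_l k); lra | apply (Rmult_eq_reg_l k); lra]. }
  right.
  assert (CX1 : forall t, X1 t = X1 0).
  { apply deriv0_const. intro t. replace 0 with (X2 t). apply DX1.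
    generalize (E1' t). fold k. rewrite Hk. intro; nra. }
  assert (CY1 : forall t, Y1 t = Y1 0).
  { apply deriv0_const. intro t. replace 0 with (Y2 t). apply DY1.
    generalize (E2' t). fold k. rewrite Hk. intro; nra. }
  assert (LX : forall t, X t - X1 0 * t = X 0 - X1 0 * 0).
  { apply (deriv0_const (fun t => X t - X1 0 * t)). intro t.
    assert (HH := isd_minus X (fun s => X1 0 * s) t _ _ (DX t) (is_derive_scal (fun s => s) t (X1 0) 1 (isd_id t))).
    rewrite (CX1 t) in HH. replace (X1 0 - X1 0 * 1) with 0 in HH by ring. exact HH. }
  assert (LY : forall t, Y t - Y1 0 * t = Y 0 - Y1 0 * 0).
  { apply (deriv0_const (fun t => Y t - Y1 0 * t)). intro t.
    assert (HH := isd_minus Y (fun s => Y1 0 * s) t _ _ (DY t) (is_derive_scal (fun s => s) t (Y1 0) 1 (isd_id t))).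
    rewrite (CY1 t) in HH. replace (Y1 0 - Y1 0 * 1) with 0 in HH by ring. exact HH. }
  assert (dx : cx d = X1 0 * omega).
  { generalize (LX omega) (PX 0). rewrite Rplus_0_l. intros; lra. }
  assert (dy : cy d = Y1 0 * omega).
  { generalize (LY omega) (PY 0). rewrite Rplus_0_l. intros; lra. }
  assert (En : A * (X1 0 ^ 2 + Y1 0 ^ 2) + c0 ^ 2 = E ^ 2).
  { generalize (Hen 0). intro H.
    assert (Hg0 : gmet A (sigma 0) (s1 0) (s1 0) = A * (X1 0 ^ 2 + Y1 0 ^ 2) + c0 ^ 2).
    { unfold gmet, alpha, beta, zeta, c0, c, X1, Y1, Z1, X. ring. }
    rewrite Hg0 in H.
    rewrite <- H. rewrite pow2_sqrt. reflexivity.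
    assert (0 <= X1 0 ^ 2 + Y1 0 ^ 2) by nra. nra. }
  assert (c0 = B) by (unfold k in Hk; lra).
  subst c0. rewrite dx, dy. rewrite <- En. rewrite H. ring.
Qed.

Lemma H_eq (p q : H) : cx p = cx q -> cy p = cy q -> cz p = cz q -> p = q.
Proof.
  destruct p as [[a b] c], q as [[a' b'] c']; unfold cx, cy, cz; simpl.
  intros -> -> ->; reflexivity.
Qed.

Lemma mg_exists A B E (G : H -> Prop) g :
  0 < A -> Rabs B < E -> G hone -> G g -> cx g ^ 2 + cy g ^ 2 <> 0 ->
  in_length_spectrum A B E G g
    (E * sqrt (A * (cx g ^ 2 + cy g ^ 2) / (E ^ 2 - B ^ 2))).
Proof.
  intros HA HBE G1 Gg HN.
  set (d1 := cx g). set (d2 := cy g). set (d3 := cz g).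
  fold d1 d2 in HN.
  set (N := d1 ^ 2 + d2 ^ 2) in *.
  assert (HE : 0 < E ^ 2 - B ^ 2).
  { apply Rabs_def2 in HBE. nra. }
  assert (Npos : 0 < N) by (unfold N in *; nra).
  set (T := sqrt (A * N / (E ^ 2 - B ^ 2))).
  assert (Tpos : 0 < T).
  { apply sqrt_lt_R0. apply Rdiv_lt_0_compat; nra. }
  assert (T2 : T * T = A * N / (E ^ 2 - B ^ 2)).
  { apply sqrt_sqrt. apply Rlt_le, Rdiv_lt_0_compat; nra. }
  set (u := d1 / T). set (v := d2 / T).
  set (s := d3 - B * T - d1 * d2 / 2).
  set (x0 := s * d2 / N). set (y0 := - s * d1 / N).
  exists (fun t => (x0 + u * t, y0 + v * t, (B + x0 * v) * t + u * v * (t * t) / 2)).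
  exists T, g.
  split; [|split; [exact Gg|split; [|split]]].
  - exists (fun t => (u, v, B + x0 * v + u * v * t)).
    exists (fun t => (0, 0, u * v)).
    split; [|split; [|split]].
    + intro t; unfold cx, cy, cz; simpl.
      split; [|split]; auto_derive; auto; try field.
    + intro t; unfold cx, cy, cz; simpl.
      split; [|split]; auto_derive; auto; try field.
    + intros t [[w1 w2] w3]. unfold cov_acc_lowered. rewrite !Dg_eq.
      unfold gmet, Omega, alpha, beta, zeta, cx, cy, cz; simpl. field.
    + intro t. unfold gmet, alpha, beta, zeta, cx, cy, cz; simpl.
      replace (A * (u * u + v * v) +
        (B + x0 * v + u * v * t - (x0 + u * t) * v) *
        (B + x0 * v + u * v * t - (x0 + u * t) * v)) with (E * E).
      apply sqrt_square. apply Rabs_def2 in HBE. lra.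
      assert (A * (u * u + v * v) = E ^ 2 - B ^ 2).
      { unfold u, v. replace (A * (d1 / T * (d1 / T) + d2 / T * (d2 / T)))
          with (A * N / (T * T)) by (unfold N; field; lra).
        rewrite T2. field. lra. }
      nra.
  - exists hone. split; [exact G1|].
    apply H_eq; unfold hmul, hinv, hone, cx, cy, cz; simpl; ring.
  - intro t. apply H_eq; unfold hmul, cx, cy, cz; simpl; change (fst (fst g)) with d1; change (snd (fst g)) with d2; change (snd g) with d3.
    + unfold u. field. lra.
    + unfold v. field. lra.
    + unfold u, v, x0, y0, s. unfold N in *. field. lra.
  - rewrite Rabs_pos_eq by lra. reflexivity.
Qed.

Ltac hsolve := apply H_eq; unfold hmul, hinv, hone, cx, cy, cz; simpl; ring.

Lemma hmul_assoc a b c : hmul (hmul a b) c = hmul a (hmul b c).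
Proof. hsolve. Qed.
Lemma hmul_1l a : hmul hone a = a.
Proof. hsolve. Qed.
Lemma hmul_1r a : hmul a hone = a.
Proof. hsolve. Qed.
Lemma hmul_Vl a : hmul (hinv a) a = hone.
Proof. hsolve. Qed.
Lemma hmul_Vr a : hmul a (hinv a) = hone.
Proof. hsolve. Qed.

Definition det2 (a b : H) : R := cx a * cy b - cy a * cx b.

Lemma central_comm p x : cx p = 0 -> cy p = 0 -> hmul p x = hmul x p.
Proof.
  intros h1 h2. apply H_eq; unfold hmul, cx, cy, cz in *; simpl; rewrite ?h1, ?h2; ring.
Qed.

Lemma comm_det g x : hmul g x = hmul x g -> det2 g x = 0.
Proof.
  intro h. apply (f_equal cz) in h. unfold hmul, det2, cx, cy, cz in *; simpl in *. lra.
Qed.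

Lemma commutator_eq a b :
  hmul (hmul (hmul a b) (hinv a)) (hinv b) = (0, 0, det2 a b).
Proof. unfold det2; hsolve. Qed.

Lemma det_zero_2 (p a b : H) : det2 a b <> 0 -> det2 p a = 0 -> det2 p b = 0 ->
  cx p = 0 /\ cy p = 0.
Proof.
  unfold det2; intros Hd h1 h2. split.
  - apply (Rmult_eq_reg_l (cx a * cy b - cy a * cx b)); [|exact Hd].
    rewrite Rmult_0_r. nsatz.
  - apply (Rmult_eq_reg_l (cx a * cy b - cy a * cx b)); [|exact Hd].
    rewrite Rmult_0_r. nsatz.
Qed.

Fixpoint gpow (g : H) (n : nat) : H :=
  match n with O => hone | S n => hmul g (gpow g n) end.
Definition gpowZ (g : H) (n : Z) : H :=
  if Z.leb 0 n then gpow g (Z.to_nat n) else hinv (gpow g (Z.to_nat (- n))).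

Lemma gpow_in (G : H -> Prop) g n : subgroup G -> G g -> G (gpow g n).
Proof.
  intros [h1 [hm hi]] Gg. induction n; simpl; auto.
Qed.
Lemma gpowZ_in (G : H -> Prop) g n : subgroup G -> G g -> G (gpowZ g n).
Proof.
  intros SG Gg. unfold gpowZ. destruct (Z.leb 0 n).
  - apply gpow_in; auto.
  - destruct SG as [h1 [hm hi]]. apply hi. apply gpow_in; auto. split; auto.
Qed.

Lemma IZR_toNat (n : Z) : (0 <= n)%Z -> IZR n = INR (Z.to_nat n).
Proof. intro h. rewrite INR_IZR_INZ, Z2Nat.id; auto. Qed.

Lemma add_fun_pow (G : H -> Prop) (f : H -> R) g n :
  subgroup G ->
  (forall a b, G a -> G b -> f (hmul a b) = f a + f b) ->
  G g -> f (gpowZ g n) = IZR n * f g.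
Proof.
  intros SG Hf Gg.
  assert (SG' := SG). destruct SG' as [h1 [hm hi]].
  assert (f1 : f hone = 0).
  { assert (h := Hf hone hone h1 h1). rewrite hmul_1l in h. lra. }
  assert (Hn : forall k, f (gpow g k) = INR k * f g).
  { induction k; simpl gpow. simpl; rewrite f1; ring.
    rewrite Hf; auto. rewrite IHk, S_INR. ring. apply gpow_in; auto. }
  assert (Hinv : forall x, G x -> f (hinv x) = - f x).
  { intros x Gx. assert (h := Hf x (hinv x) Gx (hi x Gx)). rewrite hmul_Vr, f1 in h. lra. }
  unfold gpowZ. destruct (Z.leb_spec 0 n).
  - rewrite Hn, <- IZR_toNat; auto.
  - rewrite Hinv, Hn. rewrite <- IZR_toNat by lia. rewrite opp_IZR. ring.
    apply gpow_in; auto.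
Qed.

Lemma cx_add a b : cx (hmul a b) = cx a + cx b.
Proof. reflexivity. Qed.
Lemma cy_add a b : cy (hmul a b) = cy a + cy b.
Proof. reflexivity. Qed.

Lemma discrete_cyclic (S : R -> Prop) (rho : R) :
  S 0 -> (forall a b, S a -> S b -> S (a - b)) ->
  0 < rho -> (forall s, S s -> s <> 0 -> rho <= Rabs s) ->
  forall s0, S s0 -> s0 <> 0 ->
  exists delta, 0 < delta /\ S delta /\
    forall s, S s -> exists n : Z, s = IZR n * delta.
Proof.
  intros S0 Ssub Hr Hdisc s0 Ss0 Hs0.
  assert (Sneg : forall a, S a -> S (- a)).
  { intros a Sa. replace (- a) with (0 - a) by ring. auto. }
  assert (Sadd : forall a b, S a -> S b -> S (a + b)).
  { intros a b Sa Sb. replace (a + b) with (a - - b) by ring. auto. }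
  set (Q := fun x => S (- x) /\ 0 < - x).
  assert (Qb : bound Q).
  { exists 0. intros x [_ hx]. lra. }
  assert (Qne : exists x, Q x).
  { exists (- Rabs s0). unfold Q. rewrite Ropp_involutive. split.
    - destruct (Rle_dec 0 s0). rewrite Rabs_pos_eq; auto.
      rewrite Rabs_left by lra. auto.
    - apply Rabs_pos_lt; auto. }
  destruct (completeness Q Qb Qne) as [m [Hub Hlub]].
  set (delta := - m).
  assert (lower : forall s, S s -> 0 < s -> delta <= s).
  { intros s Ss hs. unfold delta. assert (Q (- s)).
    { unfold Q. rewrite Ropp_involutive. auto. }
    apply Hub in H. lra. }
  assert (approx : forall e, 0 < e -> exists s, S s /\ 0 < s /\ s < delta + e).
  { intros e he. apply NNPP. intro hn.
    assert (is_upper_bound Q (m - e)).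
    { intros x [Sx hx]. apply Rnot_lt_le. intro hlt. apply hn.
      exists (- x). repeat split; auto. unfold delta. lra. }
    apply Hlub in H. lra. }
  assert (rho_le : rho <= delta).
  { assert (Hc : forall x, Q x -> x <= - rho).
    { intros x [Sx hx]. assert (h := Hdisc _ Sx). rewrite Rabs_pos_eq in h by lra.
      assert (rho <= - x) by (apply h; lra). lra. }
    assert (m <= - rho) by (apply Hlub; intros x hx; apply Hc; auto).
    unfold delta; lra. }
  assert (Sdelta : S delta).
  { apply NNPP. intro hn.
    destruct (approx rho Hr) as [s1 [S1 [p1 l1]]].
    assert (d1 : delta < s1).
    { destruct (Rle_lt_or_eq_dec delta s1 (lower s1 S1 p1)) as [hl|he]; auto.
      exfalso. apply hn. rewrite he. auto. }
    destruct (approx (s1 - delta)) as [s2 [S2 [p2 l2]]]; [lra|].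
    assert (d2 := lower s2 S2 p2).
    assert (h := Hdisc (s1 - s2) (Ssub _ _ S1 S2)).
    rewrite Rabs_pos_eq in h by lra. assert (rho <= s1 - s2) by (apply h; lra). lra. }
  exists delta. split; [lra|]. split; [exact Sdelta|].
  assert (Snat : forall k, S (INR k * delta)).
  { induction k. simpl. rewrite Rmult_0_l. auto.
    rewrite S_INR. replace ((INR k + 1) * delta) with (INR k * delta + delta) by ring. auto. }
  assert (SZ : forall n, S (IZR n * delta)).
  { intro n. destruct (Z.le_gt_cases 0 n).
    - rewrite IZR_toNat; auto.
    - replace (IZR n) with (- IZR (- n)) by (rewrite opp_IZR; ring).
      rewrite IZR_toNat by lia. replace (- INR (Z.to_nat (- n)) * delta)
        with (- (INR (Z.to_nat (- n)) * delta)) by ring. auto. }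
  intros s Ss. exists (Zfloor (s / delta)).
  destruct (Zfloor_bound (s / delta)) as [b1 b2].
  set (n := Zfloor (s / delta)) in *.
  assert (Sr : S (s - IZR n * delta)) by auto.
  assert (r0 : 0 <= s - IZR n * delta).
  { apply Rmult_le_compat_r with (r := delta) in b1; [|lra].
    unfold Rdiv in b1. rewrite Rmult_assoc, Rinv_l, Rmult_1_r in b1; lra. }
  assert (r1 : s - IZR n * delta < delta).
  { apply Rmult_lt_compat_r with (r := delta) in b2; [|lra].
    unfold Rdiv in b2. rewrite Rmult_assoc, Rinv_l, Rmult_1_r in b2; lra. }
  destruct (Rle_lt_or_eq_dec 0 _ r0) as [hp|he].
  - assert (h := lower _ Sr hp). lra.
  - lra.
Qed.

Lemma lat_L1 (G : H -> Prop) : cocompact_lattice G ->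
  exists a b, G a /\ G b /\ det2 a b <> 0.
Proof.
  intros [SG [_ [r Hr]]].
  apply NNPP. intro hn.
  assert (Hall : forall a b, G a -> G b -> det2 a b = 0).
  { intros a b Ga Gb. apply NNPP. intro hd. apply hn. exists a, b. auto. }
  destruct (classic (exists g, G g /\ cx g * cx g + cy g * cy g <> 0)) as [[g [Gg Hg]]|hno].
  - set (N := cx g * cx g + cy g * cy g) in *.
    assert (Np : 0 < N) by (unfold N in *; nra).
    set (t := 1 + (Rabs r + 1) / N).
    assert (t1 : 1 <= t).
    { unfold t. assert (0 <= (Rabs r + 1) / N).
      { apply Rlt_le, Rdiv_lt_0_compat; [|lra]. generalize (Rabs_pos r); lra. }
      lra. }
    assert (tN : t * N = N + Rabs r + 1) by (unfold t; field; lra).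
    destruct (Hr (- t * cy g, t * cx g, 0)) as [g' [Gg' Hs]].
    assert (hd := Hall g' g Gg' Gg).
    assert (Hs' : (cx g' + - t * cy g) ^ 2 + (cy g' + t * cx g) ^ 2 <= r).
    { unfold sqnorm, hmul, cx, cy, cz in *; simpl in *.
      set (zz := snd g' + 0 + fst (fst g') * (t * fst (fst g))) in *.
      assert (0 <= zz * (zz * 1)) by nra. lra. }
    assert (key : (cx g' + - t * cy g) ^ 2 + (cy g' + t * cx g) ^ 2
                  = cx g' ^ 2 + cy g' ^ 2 + t * (t * N)).
    { transitivity (cx g' ^ 2 + cy g' ^ 2 + t * (t * N) - 2 * t * det2 g' g).
      unfold det2, N; ring. rewrite hd; ring. }
    assert (tN2 : t * N <= t * (t * N)).
    { rewrite <- (Rmult_1_l (t * N)) at 1. apply Rmult_le_compat_r; nra. }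
    assert (Rabs r >= r) by (apply Rle_ge, Rle_abs).
    assert (0 <= cx g' ^ 2) by apply pow2_ge_0.
    assert (0 <= cy g' ^ 2) by apply pow2_ge_0.
    lra.
  - destruct (Hr (Rabs r + 1, 0, 0)) as [g' [Gg' Hs]].
    assert (hz : cx g' = 0).
    { apply NNPP. intro h. apply hno. exists g'. split; auto. nra. }
    unfold sqnorm, hmul, cx, cy, cz in *; simpl in *. rewrite hz in Hs.
    assert (Rabs r >= r) by (apply Rle_ge, Rle_abs).
    generalize (Rabs_pos r). nra.
Qed.

Lemma lat_cyc (G : H -> Prop) : cocompact_lattice G ->
  exists delta, 0 < delta /\ G (0, 0, delta) /\
    forall s, G (0, 0, s) -> exists n : Z, s = IZR n * delta.
Proof.
  intros HG. destruct (lat_L1 G HG) as [a [b [Ga [Gb Hd]]]].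
  destruct HG as [SG [[eps [He Hdisc]] _]].
  destruct SG as [h1 [hm hi]].
  set (rho := Rmin 1 eps / 2).
  assert (rp : 0 < rho) by (unfold rho; apply Rmin_case; lra).
  assert (rr : rho * rho < eps).
  { unfold rho. apply Rmin_case_strong; intro; nra. }
  apply (discrete_cyclic (fun s => G (0, 0, s)) rho) with (s0 := det2 a b).
  - exact h1.
  - intros x y Gx Gy. 
    replace (0, 0, x - y) with (hmul (0,0,x) (hinv (0,0,y))) by hsolve. auto.
  - exact rp.
  - intros s Gs hs. apply Rnot_lt_le. intro hl.
    assert (h := Hdisc _ Gs). apply hs.
    assert (hh : (0, 0, s) = hone).
    { apply h. unfold sqnorm, cx, cy, cz; simpl.
      assert (s * s < rho * rho).
      { apply Rabs_def2 in hl. nra. }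
      nra. }
    apply (f_equal cz) in hh. exact hh.
  - first [exact Hd | (rewrite <- commutator_eq; apply hm; auto; apply hm; auto)].
  - first [exact Hd | (rewrite <- commutator_eq; apply hm; auto; apply hm; auto)].
Qed.

Definition nrm (p : H) : R := cx p ^ 2 + cy p ^ 2.

Lemma nrm0 p : nrm p = 0 -> cx p = 0 /\ cy p = 0.
Proof. unfold nrm. intro h. assert (0 <= cx p ^ 2) by apply pow2_ge_0.
  assert (0 <= cy p ^ 2) by apply pow2_ge_0. split; apply pow_eq_zero_pos with (n:=2%nat) || nra; try lia.
Qed.

Lemma central_of_G (G : H -> Prop) p : cocompact_lattice G ->
  (forall x, G x -> hmul p x = hmul x p) -> cx p = 0 /\ cy p = 0.
Proof.
  intros HG Hc. destruct (lat_L1 G HG) as [a [b [Ga [Gb Hd]]]].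
  apply (det_zero_2 p a b Hd); apply comm_det; auto.
Qed.

Lemma nrm_pres A B E (G1 G2 : H -> Prop) phi :
  0 < A -> Rabs B < E -> cocompact_lattice G1 -> cocompact_lattice G2 ->
  group_iso G1 G2 phi ->
  (forall g, G1 g -> g <> hone -> forall l,
     in_length_spectrum A B E G1 g l <-> in_length_spectrum A B E G2 (phi g) l) ->
  forall g, G1 g -> nrm (phi g) = nrm g.
Proof.
  intros HA HBE HG1 HG2 [Hmap [Hhom [Hinj Hsurj]]] Hspec g Gg.
  assert (S1 := proj1 HG1). destruct S1 as [h1 [hm hi]].
  assert (HE : 0 < E) by (generalize (Rabs_pos B); lra).
  assert (HEB : 0 < E ^ 2 - B ^ 2) by (apply Rabs_def2 in HBE; nra).
  destruct (Req_dec (nrm g) 0) as [Hz|Hnz].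
  - destruct (nrm0 g Hz) as [z1 z2].
    assert (C : forall y, G2 y -> hmul (phi g) y = hmul y (phi g)).
    { intros y Gy. destruct (Hsurj y Gy) as [x [Gx <-]].
      rewrite <- !Hhom; auto. f_equal. apply central_comm; auto. }
    destruct (central_of_G G2 (phi g) HG2 C) as [c1 c2].
    rewrite Hz. unfold nrm. rewrite c1, c2. ring.
  - assert (Hpn : nrm (phi g) <> 0).
    { intro hz. destruct (nrm0 _ hz) as [c1 c2]. apply Hnz.
      assert (C : forall x, G1 x -> hmul g x = hmul x g).
      { intros x Gx. apply Hinj; auto. rewrite !Hhom; auto. apply central_comm; auto. }
      destruct (central_of_G G1 g HG1 C) as [z1 z2]. unfold nrm. rewrite z1, z2. ring. }
    assert (Hne : g <> hone).
    { intro e. apply Hnz. rewrite e. unfold nrm, hone, cx, cy; simpl. ring. }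
    assert (Hl := mg_exists A B E G1 g HA HBE h1 Gg Hnz).
    apply (Hspec g Gg Hne) in Hl.
    destruct Hl as [sigma [omega [d [Hmg [G2d [[h [Gh Hd]] [Hper Hlen]]]]]]].
    assert (dx : cx d = cx (phi g)) by (rewrite Hd; unfold hmul, hinv, cx; simpl; ring).
    assert (dy : cy d = cy (phi g)) by (rewrite Hd; unfold hmul, hinv, cy; simpl; ring).
    destruct (mg_period A B E sigma omega d HA HE Hmg Hper) as [[e1 e2]|Ho].
    + exfalso. apply Hpn. unfold nrm. rewrite <- dx, <- dy, e1, e2. ring.
    + fold (nrm g) in Hlen.
      assert (Hs : sqrt (A * nrm g / (E ^ 2 - B ^ 2)) ^ 2 = A * nrm g / (E ^ 2 - B ^ 2)).
      { apply pow2_sqrt. apply Rmult_le_pos.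
        apply Rmult_le_pos. lra. unfold nrm; generalize (pow2_ge_0 (cx g)) (pow2_ge_0 (cy g)); lra.
        apply Rlt_le, Rinv_0_lt_compat; lra. }
      assert (L2 : (E * sqrt (A * nrm g / (E ^ 2 - B ^ 2))) ^ 2 = (E * Rabs omega) ^ 2)
        by (rewrite Hlen; reflexivity).
      rewrite Rpow_mult_distr, Hs, Rpow_mult_distr in L2.
      replace (Rabs omega ^ 2) with (omega ^ 2) in L2
        by (rewrite <- !Rsqr_pow2; apply Rsqr_abs).
      assert (L3 : A * nrm g / (E ^ 2 - B ^ 2) = omega ^ 2).
      { apply (Rmult_eq_reg_l (E ^ 2)). exact L2. apply pow_nonzero. lra. }
      assert (L4 : A * nrm g = A * nrm (phi g)).
      { unfold nrm. rewrite <- dx, <- dy, <- Ho, <- L3. unfold nrm. field. lra. }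
      apply Rmult_eq_reg_l in L4; lra.
Qed.

Lemma solve2 (x y f1 f2 k1 k2 : R) : f1 * k2 - f2 * k1 <> 0 ->
  x * f1 + y * f2 = 0 -> x * k1 + y * k2 = 0 -> x = 0 /\ y = 0.
Proof.
  intros hd e1 e2. split.
  - apply (Rmult_eq_reg_l (f1 * k2 - f2 * k1)); auto. rewrite Rmult_0_r. nsatz.
  - apply (Rmult_eq_reg_l (f1 * k2 - f2 * k1)); auto. rewrite Rmult_0_r. nsatz.
Qed.

Lemma alg_O (a1 a2 b1 b2 f1 f2 k1 k2 : R) :
  a1 * b2 - a2 * b1 <> 0 ->
  f1 * f1 + f2 * f2 = a1 * a1 + a2 * a2 ->
  f1 * k1 + f2 * k2 = a1 * b1 + a2 * b2 ->
  k1 * k1 + k2 * k2 = b1 * b1 + b2 * b2 ->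
  exists c s D, c * c + s * s = 1 /\ D * D = 1 /\
    forall g1 g2 p1 p2, p1 * f1 + p2 * f2 = g1 * a1 + g2 * a2 ->
      p1 * k1 + p2 * k2 = g1 * b1 + g2 * b2 ->
      p1 = c * g1 - D * s * g2 /\ p2 = s * g1 + D * c * g2.
Proof.
  intros hD Hff Hfk Hkk.
  set (De := a1 * b2 - a2 * b1) in *.
  set (o11 := (b2 * f1 - a2 * k1) / De).
  set (o21 := (b2 * f2 - a2 * k2) / De).
  set (o12 := (a1 * k1 - b1 * f1) / De).
  set (o22 := (a1 * k2 - b1 * f2) / De).
  assert (Hdet : (f1 * k2 - f2 * k1) * (f1 * k2 - f2 * k1) = De * De).
  { unfold De. nsatz. }
  assert (hdet : f1 * k2 - f2 * k1 <> 0).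
  { intro h. rewrite h, Rmult_0_r in Hdet. apply hD. nra. }
  assert (Hlin : forall g1 g2 p1 p2, p1 * f1 + p2 * f2 = g1 * a1 + g2 * a2 ->
      p1 * k1 + p2 * k2 = g1 * b1 + g2 * b2 ->
      p1 = o11 * g1 + o12 * g2 /\ p2 = o21 * g1 + o22 * g2).
  { intros g1 g2 p1 p2 e1 e2.
    set (W1 := De * p1 - (g1 * (b2 * f1 - a2 * k1) + g2 * (a1 * k1 - b1 * f1))).
    set (W2 := De * p2 - (g1 * (b2 * f2 - a2 * k2) + g2 * (a1 * k2 - b1 * f2))).
    assert (E1 : W1 * f1 + W2 * f2 = 0) by (unfold W1, W2, De; nsatz).
    assert (E2 : W1 * k1 + W2 * k2 = 0) by (unfold W1, W2, De; nsatz).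
    destruct (solve2 W1 W2 f1 f2 k1 k2 hdet E1 E2) as [w1 w2].
    unfold W1, W2, o11, o12, o21, o22 in *. split.
    - apply (Rmult_eq_reg_l De); auto. field_simplify; auto. lra.
    - apply (Rmult_eq_reg_l De); auto. field_simplify; auto. lra. }
  assert (Hn : forall v1 v2, (o11 * v1 + o12 * v2) * (o11 * v1 + o12 * v2)
      + (o21 * v1 + o22 * v2) * (o21 * v1 + o22 * v2) = v1 * v1 + v2 * v2).
  { intros v1 v2.
    assert (K : ((b2 * f1 - a2 * k1) * v1 + (a1 * k1 - b1 * f1) * v2) *
                ((b2 * f1 - a2 * k1) * v1 + (a1 * k1 - b1 * f1) * v2) +
                ((b2 * f2 - a2 * k2) * v1 + (a1 * k2 - b1 * f2) * v2) *
                ((b2 * f2 - a2 * k2) * v1 + (a1 * k2 - b1 * f2) * v2)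
                = De * De * (v1 * v1 + v2 * v2)) by (unfold De; nsatz).
    unfold o11, o12, o21, o22. apply (Rmult_eq_reg_l (De * De)).
    2: { intro h. apply hD. nra. }
    rewrite <- K. field. auto. }
  assert (c1 := Hn 1 0). assert (c2 := Hn 0 1). assert (c3 := Hn 1 1).
  set (D := o11 * o22 - o12 * o21).
  assert (r1 : o11 * o11 + o21 * o21 = 1) by nsatz.
  assert (r2 : o12 * o12 + o22 * o22 = 1) by nsatz.
  assert (r3 : o11 * o12 + o21 * o22 = 0) by nsatz.
  assert (DD : D * D = 1) by (unfold D; nsatz).
  assert (q1 : o12 = - D * o21) by (unfold D; nsatz).
  assert (q2 : o22 = D * o11) by (unfold D; nsatz).
  exists o11, o21, D. split; [exact r1|]. split; [exact DD|].
  intros g1 g2 p1 p2 e1 e2. destruct (Hlin g1 g2 p1 p2 e1 e2) as [h1 h2].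
  rewrite h1, h2, q1, q2. split; ring.
Qed.

Definition Phi0 (c s D : R) (p : H) : H :=
  (c * cx p - D * s * cy p, s * cx p + D * c * cy p,
   D * (cz p - cx p * cy p / 2) + (c * cx p - D * s * cy p) * (s * cx p + D * c * cy p) / 2).

Lemma Phi0_hom c s D p q : c * c + s * s = 1 -> D * D = 1 ->
  Phi0 c s D (hmul p q) = hmul (Phi0 c s D p) (Phi0 c s D q).
Proof.
  intros h1 h2. apply H_eq; unfold Phi0, hmul, cx, cy, cz; simpl; try ring.
  destruct p as [[p1 p2] p3], q as [[q1 q2] q3]; simpl.
  unfold Rdiv. assert (hh : 2 * / 2 = 1) by (apply Rinv_r; lra).
  set (t := / 2) in *. nsatz.
Qed.


Lemma cz_mul p q : cz (hmul p q) = cz p + cz q + cx p * cy q.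
Proof. reflexivity. Qed.

Lemma key_conj (G1 G2 : H -> Prop) phi c s D :
  cocompact_lattice G1 -> group_iso G1 G2 phi ->
  c * c + s * s = 1 -> D * D = 1 ->
  (forall g, G1 g -> cx (phi g) = c * cx g - D * s * cy g /\
                     cy (phi g) = s * cx g + D * c * cy g) ->
  exists h, forall g, G1 g -> phi g = hmul (hmul h (Phi0 c s D g)) (hinv h).
Proof.
  intros HG [Hmap [Hhom [Hinj Hsurj]]] hc hD Hpi.
  assert (SG := proj1 HG). assert (SG' := SG). destruct SG' as [h1 [hm hi]].
  set (tau := fun p => cz (phi p) - cz (Phi0 c s D p)).
  assert (Tadd : forall a b, G1 a -> G1 b -> tau (hmul a b) = tau a + tau b).
  { intros a b Ga Gb. unfold tau. rewrite Hhom, Phi0_hom by auto.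
    destruct (Hpi a Ga) as [xa ya]. destruct (Hpi b Gb) as [xb yb].
    rewrite !cz_mul, xa, yb.
    unfold Phi0, cx, cy, cz; simpl. ring. }
  assert (T1 : tau hone = 0).
  { assert (h := Tadd hone hone h1 h1). rewrite hmul_1l in h. lra. }
  assert (Tinv : forall x, G1 x -> tau (hinv x) = - tau x).
  { intros x Gx. assert (h := Tadd x (hinv x) Gx (hi x Gx)). rewrite hmul_Vr, T1 in h. lra. }
  destruct (lat_L1 G1 HG) as [a [b [Ga [Gb HDe]]]].
  destruct (lat_cyc G1 HG) as [delta [dp [Gdel Hdel]]].
  set (Gc := fun p => G1 p /\ cx p = 0 /\ cy p = 0).
  assert (SGc : subgroup Gc).
  { split; [|split].
    - split; auto.
    - intros x y [Gx [x1 x2]] [Gy [y1 y2]]. split; auto.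
      unfold hmul, cx, cy in *; simpl; split; lra.
    - intros x [Gx [x1 x2]]. split; auto. unfold hinv, cx, cy in *; simpl; split; lra. }
  assert (Gcd : Gc (0, 0, delta)) by (split; auto).
  assert (powc : forall n : Z, gpowZ (0, 0, delta) n = (0, 0, IZR n * delta)).
  { intro n. apply H_eq.
    - rewrite (add_fun_pow G1 cx (0,0,delta) n SG); auto.
      unfold cx; simpl; ring.
    - rewrite (add_fun_pow G1 cy (0,0,delta) n SG); auto.
      unfold cy; simpl; ring.
    - rewrite (add_fun_pow Gc cz (0,0,delta) n SGc); auto.
      intros x y [_ [x1 _]] [_ [_ y2]]. unfold hmul, cz, cx, cy in *; simpl.
      rewrite x1; ring. }
  assert (Tpow : forall x n, G1 x -> tau (gpowZ x n) = IZR n * tau x).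
  { intros x n Gx. apply (add_fun_pow G1); auto. }
  assert (Tdel : tau (0, 0, delta) = 0).
  { assert (Gk : G1 (0, 0, det2 a b)).
    { rewrite <- commutator_eq. auto 10. }
    destruct (Hdel _ Gk) as [m Hm].
    assert (Tk : tau (0, 0, det2 a b) = 0).
    { rewrite <- commutator_eq. rewrite !Tadd, !Tinv; auto 10. ring. }
    rewrite Hm, <- powc, Tpow in Tk by auto.
    assert (IZR m <> 0) by (intro e; apply HDe; rewrite Hm, e; ring).
    apply Rmult_integral in Tk. destruct Tk; [contradiction|assumption]. }
  assert (Tcen : forall z, G1 (0, 0, z) -> tau (0, 0, z) = 0).
  { intros z Gz. destruct (Hdel _ Gz) as [n ->]. rewrite <- powc, Tpow by auto.
    rewrite Tdel; ring. }
  set (De := det2 a b) in *.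
  set (l1 := (cy b * tau a - cy a * tau b) / De).
  set (l2 := (cx a * tau b - cx b * tau a) / De).
  assert (Tlin : forall g, G1 g -> tau g = l1 * cx g + l2 * cy g).
  { intros g Gg.
    assert (Gca : G1 (0, 0, det2 g a)).
    { rewrite <- commutator_eq. auto 10. }
    assert (Gcb : G1 (0, 0, det2 g b)).
    { rewrite <- commutator_eq. auto 10. }
    destruct (Hdel _ Gca) as [n1 Hn1].
    destruct (Hdel _ Gcb) as [n2 Hn2].
    assert (Gab : G1 (0, 0, De)).
    { unfold De. rewrite <- commutator_eq. auto 10. }
    destruct (Hdel _ Gab) as [m Hm].
    set (k := hmul (hmul (gpowZ g m) (gpowZ a (- n2))) (gpowZ b n1)).
    assert (Gk : G1 k).
    { unfold k. apply hm; [apply hm|]; apply gpowZ_in; auto. }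
    assert (kx : cx k = IZR m * cx g - IZR n2 * cx a + IZR n1 * cx b).
    { unfold k. rewrite !cx_add.
      rewrite !(add_fun_pow G1 cx) by (auto; intros; apply cx_add).
      rewrite opp_IZR. ring. }
    assert (ky : cy k = IZR m * cy g - IZR n2 * cy a + IZR n1 * cy b).
    { unfold k. rewrite !cy_add.
      rewrite !(add_fun_pow G1 cy) by (auto; intros; apply cy_add).
      rewrite opp_IZR. ring. }
    assert (kx0 : cx k = 0).
    { apply (Rmult_eq_reg_l delta); [|lra]. rewrite kx, Rmult_0_r.
      transitivity (cx g * (IZR m * delta) - (IZR n2 * delta) * cx a + (IZR n1 * delta) * cx b).
      ring. rewrite <- Hm, <- Hn1, <- Hn2. unfold De, det2. ring. }
    assert (ky0 : cy k = 0).
    { apply (Rmult_eq_reg_l delta); [|lra]. rewrite ky, Rmult_0_r.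
      transitivity (cy g * (IZR m * delta) - (IZR n2 * delta) * cy a + (IZR n1 * delta) * cy b).
      ring. rewrite <- Hm, <- Hn1, <- Hn2. unfold De, det2. ring. }
    assert (Tk : tau k = 0).
    { assert (ke : k = (0, 0, cz k)).
      { apply H_eq; auto. }
      rewrite ke. apply Tcen. rewrite <- ke. exact Gk. }
    assert (Tk' : tau k = IZR m * tau g - IZR n2 * tau a + IZR n1 * tau b).
    { unfold k. rewrite !Tadd by (try apply hm; apply gpowZ_in; auto).
      rewrite !Tpow by auto. rewrite opp_IZR. ring. }
    apply (Rmult_eq_reg_l De); [|exact HDe].
    unfold l1, l2. field_simplify; [|exact HDe].
    rewrite Hm at 1.
    transitivity (delta * (IZR m * tau g)). ring.
    replace (IZR m * tau g) with (IZR n2 * tau a - IZR n1 * tau b) by lra.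
    transitivity ((IZR n2 * delta) * tau a - (IZR n1 * delta) * tau b). ring.
    rewrite <- Hn1, <- Hn2. unfold det2. ring. }
  exists (l1 * s + D * l2 * c, - l1 * c + D * l2 * s, 0).
  intros g Gg. destruct (Hpi g Gg) as [px py].
  assert (Tg := Tlin g Gg). unfold tau in Tg.
  apply H_eq.
  - rewrite px. unfold hmul, hinv, Phi0, cx, cy, cz; simpl. ring.
  - rewrite py. unfold hmul, hinv, Phi0, cx, cy, cz; simpl. ring.
  - assert (Z : cz (phi g) = cz (Phi0 c s D g) + l1 * cx g + l2 * cy g) by lra.
    rewrite Z. unfold hmul, hinv, Phi0, cx, cy, cz; simpl.
    clearbody l1 l2. destruct g as [[g1 g2] g3]. simpl. clear - hc hD.
    unfold Rdiv. set (t := / 2). clearbody t. nsatz.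
Qed.

Notation HN := (prod_NormedModule R_AbsRing
         (prod_NormedModule R_AbsRing R_NormedModule R_NormedModule)
         R_NormedModule).

Lemma fd_cx (p : H) : filterdiff (fun q : H => cx q) (locally (p : HN)) (fun u : H => cx u).
Proof.
  apply filterdiff_linear. unfold cx.
  apply (is_linear_comp (fun t : HN => fst t) (fun t => fst t)); apply is_linear_fst.
Qed.
Lemma fd_cy (p : H) : filterdiff (fun q : H => cy q) (locally (p : HN)) (fun u : H => cy u).
Proof.
  apply filterdiff_linear. unfold cy.
  apply (is_linear_comp (fun t : HN => fst t) (fun t => snd t)). apply is_linear_fst. apply is_linear_snd.
Qed.
Lemma fd_cz (p : H) : filterdiff (fun q : H => cz q) (locally (p : HN)) (fun u : H => cz u).
Proof.
  apply filterdiff_linear. unfold cz. apply (is_linear_snd (U := prod_NormedModule R_AbsRing R_NormedModule R_NormedModule) (V := R_NormedModule)).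
Qed.
Lemma fd_const (p : H) (a : R) : filterdiff (fun _ : H => a) (locally (p : HN)) (fun _ : H => 0).
Proof. exact (filterdiff_const (U := HN) (V := R_NormedModule) a). Qed.
Lemma fd_plus (p : H) (f g lf lg : H -> R) :
  filterdiff f (locally (p : HN)) lf -> filterdiff g (locally (p : HN)) lg ->
  filterdiff (fun q => f q + g q) (locally (p : HN)) (fun u => lf u + lg u).
Proof. intros H1 H2. exact (filterdiff_plus_fct (U := HN) (V := R_NormedModule) f g lf lg H1 H2). Qed.
Lemma fd_mult (p : H) (f g lf lg : H -> R) :
  filterdiff f (locally (p : HN)) lf -> filterdiff g (locally (p : HN)) lg ->
  filterdiff (fun q => f q * g q) (locally (p : HN)) (fun u => lf u * g p + f p * lg u).
Proof. intros H1 H2. exact (filterdiff_mult_fct (U := HN) f g p lf lg Rmult_comm H1 H2). Qed.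
Lemma fd_pair3 (p : H) (f g k lf lg lk : H -> R) :
  filterdiff f (locally (p : HN)) lf -> filterdiff g (locally (p : HN)) lg ->
  filterdiff k (locally (p : HN)) lk ->
  filterdiff (fun q => (f q, g q, k q) : H) (locally (p : HN)) (fun u => (lf u, lg u, lk u) : H).
Proof.
  intros H1 H2 H3.
  assert (P : forall {U V W : NormedModule R_AbsRing} (f : U -> V) (g : U -> W) x lf lg,
     filterdiff f (locally x) lf -> filterdiff g (locally x) lg ->
     filterdiff (fun y => (f y, g y)) (locally x) (fun y => (lf y, lg y))).
  { clear. intros U V W f g x lf lg H1 H2.
    apply (filterdiff_comp'_2 f g (fun a b => (a, b)) x lf lg (fun a b => (a, b)) H1 H2).
    apply (filterdiff_ext (fun t => t)). intro y; destruct y; reflexivity.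
    apply filterdiff_ext_lin with (fun t => t). apply filterdiff_id.
    intro y; destruct y; reflexivity. }
  apply (P HN (prod_NormedModule R_AbsRing R_NormedModule R_NormedModule) R_NormedModule
           (fun q => (f q, g q)) k p (fun u => (lf u, lg u)) lk); auto.
Qed.

Lemma fd_lin (p : H) (al be ga ka : R) :
  filterdiff (fun q : H => ka + al * cx q + be * cy q + ga * cz q) (locally (p : HN))
    (fun u : H => al * cx u + be * cy u + ga * cz u).
Proof.
  apply filterdiff_ext_lin with
    (fun u => ((0 + (0 * cx p + al * cx u)) + (0 * cy p + be * cy u)) + (0 * cz p + ga * cz u)).
  2: intro u; simpl; ring.
  apply fd_plus; [apply fd_plus; [apply fd_plus|]|]; try apply fd_const;
    apply fd_mult; try apply fd_const; try apply fd_cx; try apply fd_cy; apply fd_cz.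
Qed.

Lemma fd_lin' (p : H) (al be ga ka : R) (f : H -> R) :
  (forall q, f q = ka + al * cx q + be * cy q + ga * cz q) ->
  filterdiff f (locally (p : HN)) (fun u : H => al * cx u + be * cy u + ga * cz u).
Proof.
  intro e. apply (filterdiff_ext (fun q : H => ka + al * cx q + be * cy q + ga * cz q)).
  intro; symmetry; apply e. apply fd_lin.
Qed.

Lemma grp_id1 h x y :
  hmul (hmul (hmul h x) (hinv h)) (hmul h y) = hmul h (hmul x y).
Proof. hsolve. Qed.

Lemma hmul_cancel h x y : hmul h x = hmul h y -> x = y.
Proof.
  intro e. rewrite <- (hmul_1l x), <- (hmul_1l y), <- (hmul_Vl h), !hmul_assoc, e.
  reflexivity.
Qed.

Lemma Phi0_inj c s D p q : c * c + s * s = 1 -> D * D = 1 ->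
  Phi0 c s D p = Phi0 c s D q -> p = q.
Proof.
  intros hc hD e.
  assert (e1 := f_equal cx e). assert (e2 := f_equal cy e). assert (e3 := f_equal cz e).
  destruct p as [[p1 p2] p3], q as [[q1 q2] q3].
  unfold Phi0, cx, cy, cz in *; simpl in *.
  assert (x : p1 = q1) by (clear e3 e; nsatz).
  assert (y : p2 = q2) by (clear e3 e; nsatz).
  subst. f_equal. unfold Rdiv in e3. set (t := / 2) in *. clear e e1 e2. clearbody t. nsatz.
Qed.

Lemma iso_from (A : R) (G1 G2 : H -> Prop) phi c s D h :
  c * c + s * s = 1 -> D * D = 1 -> group_iso G1 G2 phi ->
  (forall g, G1 g -> phi g = hmul (hmul h (Phi0 c s D g)) (hinv h)) ->
  isometric_quotients A G1 G2.
Proof.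
  intros hc hD [Hmap [Hhom [Hinj Hsurj]]] Hconj.
  set (F := fun q => hmul h (Phi0 c s D q)).
  set (X := fun v : H => c * cx v - D * s * cy v).
  set (Y := fun v : H => s * cx v + D * c * cy v).
  set (DF := fun (p : H) (u : V) => ((X u, Y u,
      D * (cz u - (cx u * cy p + cx p * cy u) / 2) + (X u * Y p + X p * Y u) / 2
      + cx h * Y u) : V)).
  assert (Finj : forall p q, F p = F q -> p = q).
  { intros p q e. apply hmul_cancel in e. apply Phi0_inj in e; auto. }
  assert (FF : forall g p, G1 g -> F (hmul g p) = hmul (phi g) (F p)).
  { intros g p Gg. unfold F. rewrite Hconj, grp_id1, Phi0_hom; auto. }
  exists F, DF. split; [|split; [|split; [|split]]].
  - exact Finj.
  - intro q. set (r := hmul (hinv h) q).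
    set (x := c * cx r + s * cy r). set (y := D * (- s * cx r + c * cy r)).
    exists (x, y, D * (cz r - cx r * cy r / 2) + x * y / 2).
    unfold F. replace (Phi0 c s D (x, y, D * (cz r - cx r * cy r / 2) + x * y / 2)) with r.
    unfold r. rewrite <- hmul_assoc, hmul_Vr, hmul_1l. reflexivity.
    unfold x, y. clearbody r. destruct r as [[r1 r2] r3].
    apply H_eq; unfold Phi0, cx, cy, cz; simpl; clear - hc hD; unfold Rdiv;
      [nsatz | nsatz | ].
    assert (2 * / 2 = 1) by field. set (t := / 2) in *. clearbody t. nsatz.
  - intro p.
    apply (filterdiff_ext (fun q => (cx h + X q, cy h + Y q,
              cz h + (D * (cz q - cx q * cy q / 2) + X q * Y q / 2) + cx h * Y q) : H)).
    { intro q. reflexivity. }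
    apply fd_pair3.
    + apply filterdiff_ext_lin with (fun u : H => c * cx u + - (D * s) * cy u + 0 * cz u).
      apply (fd_lin' p c (- (D * s)) 0 (cx h)). intro q; unfold X; ring.
      intro u; unfold X; simpl; ring.
    + apply filterdiff_ext_lin with (fun u : H => s * cx u + (D * c) * cy u + 0 * cz u).
      apply (fd_lin' p s (D * c) 0 (cy h)). intro q; unfold Y; ring.
      intro u; unfold Y; simpl; ring.
    + apply (filterdiff_ext (fun q => (cz h + cx h * s * cx q + cx h * D * c * cy q + D * cz q)
            + ((- D / 2 * cx q) * cy q) + ((X q / 2) * Y q))).
      { intro q. unfold X, Y. simpl; field. }
      eapply filterdiff_ext_lin.
      apply fd_plus; [apply fd_plus|].
      * apply (fd_lin' p (cx h * s) (cx h * D * c) D (cz h)). intro q; ring.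
      * apply fd_mult. apply (fd_lin' p (- D / 2) 0 0 0). intro q; ring. apply fd_cy.
      * apply fd_mult. apply (fd_lin' p (c / 2) (- (D * s) / 2) 0 0). intro q; unfold X; field.
        apply (fd_lin' p s (D * c) 0 0). intro q; unfold Y; ring.
      * intro u. unfold X, Y. simpl. field.
  - intros p u v. unfold F, DF, X, Y.
    destruct p as [[p1 p2] p3], u as [[u1 u2] u3], v as [[v1 v2] v3].
    destruct h as [[h1 h2] h3].
    unfold gmet, hmul, Phi0, alpha, beta, zeta, cx, cy, cz; simpl.
    clear - hc hD. unfold Rdiv. assert (2 * / 2 = 1) by field. set (t := / 2) in *. clearbody t.
    nsatz.
  - intros p q. split.
    + intros [g [Gg ->]]. exists (phi g). split; auto.
    + intros [g' [Gg' Hq]]. destruct (Hsurj g' Gg') as [g [Gg <-]].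
      exists g. split; auto. apply Finj. rewrite FF; auto.
Qed.

Theorem theorem4p19 (A B : R) (G1 G2 : H -> Prop) :
  0 < A ->
  cocompact_lattice G1 -> cocompact_lattice G2 ->
  (exists E : R, Rabs B < E /\
     same_marked_magnetic_length_spectrum A B E G1 G2) ->
  isometric_quotients A G1 G2.
Proof.
  intros HA HG1 HG2 [E [HBE [phi [Hiso Hspec]]]].
  assert (Np := nrm_pres A B E G1 G2 phi HA HBE HG1 HG2 Hiso Hspec).
  assert (Hiso' := Hiso). destruct Hiso' as [Hmap [Hhom [Hinj Hsurj]]].
  assert (S1 := proj1 HG1). destruct S1 as [h1 [hm hi]].
  assert (Dp : forall x y, G1 x -> G1 y ->
    cx (phi x) * cx (phi y) + cy (phi x) * cy (phi y) = cx x * cx y + cy x * cy y).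
  { intros x y Gx Gy.
    assert (e := Np (hmul x y) (hm x y Gx Gy)). rewrite Hhom in e by auto.
    assert (ex := Np x Gx). assert (ey := Np y Gy).
    unfold nrm in *. rewrite !cx_add, !cy_add in e.
    set (p1 := cx (phi x)) in *. set (p2 := cy (phi x)) in *.
    set (q1 := cx (phi y)) in *. set (q2 := cy (phi y)) in *.
    set (x1 := cx x) in *. set (x2 := cy x) in *.
    set (y1 := cx y) in *. set (y2 := cy y) in *.
    clearbody p1 p2 q1 q2 x1 x2 y1 y2. simpl in *.
    clear - e ex ey. nsatz. }
  destruct (lat_L1 G1 HG1) as [a [b [Ga [Gb Hab]]]].
  destruct (alg_O (cx a) (cy a) (cx b) (cy b) (cx (phi a)) (cy (phi a))
              (cx (phi b)) (cy (phi b))) as [c [s [D [hc [hD Hlin]]]]].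
  - exact Hab.
  - apply Dp; auto.
  - apply Dp; auto.
  - apply Dp; auto.
  - assert (Hpi : forall g, G1 g -> cx (phi g) = c * cx g - D * s * cy g /\
                     cy (phi g) = s * cx g + D * c * cy g).
    { intros g Gg. apply Hlin; apply Dp; auto. }
    destruct (key_conj G1 G2 phi c s D HG1 Hiso hc hD Hpi) as [h Hh].
    exact (iso_from A G1 G2 phi c s D h hc hD Hiso Hh).
Qed.
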